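(* Let $A$ be a unital $C^*$-algebra and let $k>1$ be an integer. Suppose $e_1,\dots,e_k\in A$ are mutually orthogonal projections and $u\in U(A)$ is a unitary with $u^*e_iu=e_{i+1}$ for $i=1,\dots,k$, where $e_{k+1}=e_1$. Suppose $B$ is a finite dimensional $C^*$-subalgebra of $e_1Ae_1$ and $z\in U_0(e_1Ae_1)$ satisfies $z^*(u^k)^*bu^kz=b$ for all $b\in B$, and that $z=z_1z_2\cdots z_{k-1}$ with $z_i\in U(e_1Ae_1)$ for $i=1,\dots,k-1$; set $z_k=e_1$ (the unit of $e_1Ae_1$). Define $$w=\sum_{i=1}^k e_iu^{k+1-i}z_i(u^{k-i})^*+\Big(1-\sum_{i=1}^k e_i\Big)u.$$ Then $\|w-u\|\le\max\{\|z_i-e_1\|:1\le i\le k-1\}$, $(w^i)^*e_1w^i=e_{i+1}$ for $i=1,\dots,k-1$, and $(w^k)^*bw^k=b$ for all $b\in B$.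
   Context: $U(D)$ denotes the unitary group of a unital $C^*$-algebra $D$ and $U_0(D)$ the connected component of its identity; $e_1Ae_1$ is a unital $C^*$-algebra with unit $e_1$. *)

(* Defs.v *)
From mathcomp Require Import all_boot all_order all_algebra.
From mathcomp Require Import complex.
From mathcomp Require Import reals.
Set Implicit Arguments. Unset Strict Implicit. Unset Printing Implicit Defensive.
Import Order.TTheory GRing.Theory Num.Theory.
Local Open Scope ring_scope.

Definition is_unital_Cstar (R : realType) (A : algType R[i])
    (star : A -> A) (nrm : A -> R) : Prop :=
  [/\
    [/\ (forall a b, star (a + b) = star a + star b),
      (forall (c : R[i]) a, star (c *: a) = conjc c *: star a),
      (forall a b, star (a * b) = star b * star a) &
      (forall a, star (star a) = a)],
    [/\ (forall a, nrm a = 0 -> a = 0),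
      (forall (c : R[i]) a, nrm (c *: a) = ComplexField.Normc.normc c * nrm a),
      (forall a b, nrm (a + b) <= nrm a + nrm b) &
      (forall a b, nrm (a * b) <= nrm a * nrm b)] &
    [/\
      (forall a, nrm (star a * a) = nrm a ^+ 2),
      nrm 1 = 1 &
      (forall s : nat -> A,
        (forall eps : R, 0 < eps -> exists N : nat, forall m n : nat,
           (N <= m)%N -> (N <= n)%N -> nrm (s m - s n) < eps) ->
        exists l : A, forall eps : R, 0 < eps -> exists N : nat, forall n : nat,
           (N <= n)%N -> nrm (s n - l) < eps)]].

Definition unitary_el (R : realType) (A : algType R[i]) (star : A -> A) (x : A) :=
  star x * x = 1 /\ x * star x = 1.

Definition projection_el (R : realType) (A : algType R[i]) (star : A -> A) (p : A) :=
  p * p = p /\ star p = p.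

Definition in_corner (R : realType) (A : algType R[i]) (e x : A) := e * x * e = x.

(* U(eAe): unitaries of the unital C*-algebra eAe, whose unit is e *)
Definition unitary_corner (R : realType) (A : algType R[i]) (star : A -> A)
    (e x : A) :=
  in_corner e x /\ star x * x = e /\ x * star x = e.

Definition rel_open (R : realType) (A : algType R[i]) (nrm : A -> R)
    (S O : A -> Prop) :=
  forall x, S x -> O x -> exists2 eps : R, 0 < eps &
    forall y, S y -> nrm (y - x) < eps -> O y.

Definition connected_subset (R : realType) (A : algType R[i]) (nrm : A -> R)
    (S : A -> Prop) :=
  forall O1 O2 : A -> Prop, rel_open nrm S O1 -> rel_open nrm S O2 ->
    (forall x, S x -> O1 x \/ O2 x) ->
    (forall x, S x -> O1 x -> O2 x -> False) ->
    (forall x, S x -> O1 x) \/ (forall x, S x -> O2 x).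

(* U_0(eAe): the connected component of the unit e in U(eAe), i.e. the union
   of all connected subsets of U(eAe) containing e *)
Definition unitary0_corner (R : realType) (A : algType R[i]) (star : A -> A)
    (nrm : A -> R) (e z : A) :=
  exists S : A -> Prop, [/\ (forall x, S x -> unitary_corner star e x),
    S e, S z & connected_subset nrm S].

Definition fd_Cstar_subalg_corner (R : realType) (A : algType R[i])
    (star : A -> A) (nrm : A -> R) (e : A) (B : A -> Prop) :=
  [/\ [/\ B 0,
      (forall a b, B a -> B b -> B (a + b)),
      (forall (c : R[i]) a, B a -> B (c *: a)),
      (forall a b, B a -> B b -> B (a * b)) &
      (forall a, B a -> B (star a))],
      (forall a, B a -> in_corner e a),
      (forall (s : nat -> A) (l : A), (forall n, B (s n)) ->
         (forall eps : R, 0 < eps -> exists N : nat, forall n : nat,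
            (N <= n)%N -> nrm (s n - l) < eps) -> B l) &
      (exists s : seq A, (forall x, x \in s -> B x) /\
         forall b, B b -> exists c : nat -> R[i],
           b = \sum_(i < size s) c i *: s`_i)].

(* Main.v *)
Require Import Defs.
From mathcomp Require Import all_boot all_order all_algebra.
From mathcomp Require Import complex.
From mathcomp Require Import reals.
From mathcomp Require Import ring lra zify.

Import Order.TTheory GRing.Theory Num.Theory.
Local Open Scope ring_scope.

Lemma bern (R : realType) (q : R) N : 1 <= q -> 1 + N%:R * (q - 1) <= q ^+ N.
Proof. move=> q1; elim: N => [|N IH]; first by rewrite mul0r addr0 expr0.
rewrite exprS -natr1.
apply: le_trans (_ : q * (1 + N%:R * (q - 1)) <= _); last first.
  by apply: ler_wpM2l => //; apply: le_trans q1.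
have n0 : 0 <= (N%:R : R) by [].
have h : 0 <= N%:R * ((q - 1) * (q - 1)) by apply: mulr_ge0 => //; nra.
nra. Qed.

Lemma RL (R : realType) (a b : R) (m : nat) : 0 <= a -> 0 <= b ->
  (forall n, a ^+ (2 ^ n) <= m%:R * b ^+ (2 ^ n)) -> a <= b.
Proof. move=> a0 b0 h; rewrite leNgt; apply/negP => ba.
have [b00|bp] := eqVneq b 0.
  by move: (h 0%N); rewrite expn0 !expr1 b00 mulr0 leNgt (le_lt_trans b0 ba).
have bp' : 0 < b by rewrite lt_def bp b0.
set q := a / b.
have q1 : 1 < q by rewrite /q ltr_pdivlMr // mul1r.
set t := q - 1.
have t0 : 0 < t by rewrite /t subr_gt0.
set n := Num.Def.archi_bound (m%:R / t).
have hn : m%:R / t < n%:R by apply: archi_boundP; apply: divr_ge0 => //; exact: ltW.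
have h2 : (n < 2 ^ n)%N by apply: ltn_expl.
have hq : q ^+ (2 ^ n) <= m%:R.
  rewrite /q expr_div_n ler_pdivrMr ?exprn_gt0 //; exact: h.
have := @bern R q (2 ^ n) (ltW q1); rewrite -/t => hb.
have : m%:R < (2 ^ n)%:R * t.
  rewrite -ltr_pdivrMr //; apply: lt_trans hn _; rewrite ltr_nat //.
move=> hm; have := le_trans hb hq; lra. Qed.

Section CS.
Variables (R : realType) (A : algType R[i]) (star : A -> A) (nrm : A -> R).
Hypothesis starD : forall a b, star (a + b) = star a + star b.
Hypothesis starM : forall a b, star (a * b) = star b * star a.
Hypothesis starK : forall a, star (star a) = a.
Hypothesis nrmZ : forall (c : R[i]) a, nrm (c *: a) = ComplexField.Normc.normc c * nrm a.
Hypothesis nrmD : forall a b, nrm (a + b) <= nrm a + nrm b.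
Hypothesis nrmM : forall a b, nrm (a * b) <= nrm a * nrm b.
Hypothesis nrmC : forall a, nrm (star a * a) = nrm a ^+ 2.
Hypothesis nrm1 : nrm 1 = 1.

Lemma star0 : star 0 = 0.
Proof. have h := starD 0 0; rewrite addr0 in h.
by apply: (addrI (star 0)); rewrite addr0 -h. Qed.

Lemma starN x : star (- x) = - star x.
Proof. by apply: (addrI (star x)); rewrite -starD !subrr star0. Qed.

Lemma starB x y : star (x - y) = star x - star y.
Proof. by rewrite starD starN. Qed.

Lemma star1 : star 1 = 1.
Proof. have h := starM 1 (star 1). by rewrite mul1r starK mul1r in h. Qed.

Lemma star_sum (r : seq nat) (F : nat -> A) :
  star (\sum_(i <- r) F i) = \sum_(i <- r) star (F i).
Proof. exact: (big_morph star starD star0). Qed.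

Lemma starX x n : star (x ^+ n) = star x ^+ n.
Proof. elim: n => [|n IH]; first by rewrite !expr0 star1.
by rewrite exprS starM IH exprSr. Qed.

Lemma nrm0 : nrm 0 = 0.
Proof. by rewrite -(scale0r (0 : A)) nrmZ ComplexField.Normc.normc0 mul0r. Qed.

Lemma nrmN x : nrm (- x) = nrm x.
Proof. by rewrite -scaleN1r nrmZ (normcN (1 : R[i])) ComplexField.Normc.normc1 mul1r. Qed.

Lemma nrm_ge0 x : 0 <= nrm x.
Proof. have h := nrmD x (- x). rewrite subrr nrm0 nrmN in h.
by rewrite -(pmulr_rge0 _ (ltr0n R 2)) mulr2n mulrDl !mul1r. Qed.

Lemma nrm_unit V : star V * V = 1 -> nrm V = 1.
Proof. move=> h; have := nrmC V; rewrite h nrm1 => /esym /eqP.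
rewrite sqrf_eq1 => /orP [/eqP //|/eqP h2].
by have := nrm_ge0 V; rewrite h2 ler0N1. Qed.

Lemma nrm_sum (r : seq nat) (F : nat -> A) :
  nrm (\sum_(i <- r) F i) <= \sum_(i <- r) nrm (F i).
Proof. elim: r => [|a r IH]; first by rewrite !big_nil nrm0.
rewrite !big_cons; apply: le_trans (nrmD _ _) _; exact: lerD. Qed.

Lemma unit_conj V a b : star V * V = 1 -> V * star V = 1 ->
  star V * a * V = b ->
  [/\ a * V = V * b, star V * a = b * star V & V * b * star V = a].
Proof. move=> h1 h2 h; rewrite -h; split.
- by rewrite !mulrA h2 mul1r.
- by rewrite -!mulrA h2 mulr1.
- by rewrite !mulrA h2 mul1r -mulrA h2 mulr1. Qed.

Lemma unitX V n : star V * V = 1 -> V * star V = 1 ->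
  star (V ^+ n) * V ^+ n = 1 /\ V ^+ n * star (V ^+ n) = 1.
Proof. move=> h1 h2; rewrite starX -!exprMn_comm ?h1 ?h2 ?expr1n //.
- by rewrite /GRing.comm h1 h2.
- by rewrite /GRing.comm h1 h2. Qed.


Lemma orth_sq (r : seq nat) (f : nat -> A) : uniq r ->
  (forall i j, i \in r -> j \in r -> i != j -> star (f i) * f j = 0) ->
  star (\sum_(i <- r) f i) * \sum_(i <- r) f i = \sum_(i <- r) star (f i) * f i.
Proof.
elim: r => [|a r IH] /=; first by rewrite !big_nil star0 mul0r.
move=> /andP [ar ur] h.
rewrite !big_cons starD mulrDl !mulrDr IH //; last first.
  by move=> i j ir jr; apply: h; rewrite in_cons ?ir ?jr orbT.
have -> : star (f a) * \sum_(i <- r) f i = 0.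
  rewrite mulr_sumr big1_seq // => j /andP [_ jr]; apply: h; rewrite ?mem_head ?in_cons ?jr ?orbT //.
  by apply/eqP => aj; move: ar; rewrite aj jr.
have -> : star (\sum_(i <- r) f i) * f a = 0.
  rewrite star_sum mulr_suml big1_seq // => j /andP [_ jr]; apply: h; rewrite ?mem_head ?in_cons ?jr ?orbT //.
  by apply/eqP => aj; move: ar; rewrite -aj jr.
by rewrite addr0 add0r. Qed.

Lemma pow_sa y n : star y = y -> nrm (y ^+ (2 ^ n)) = nrm y ^+ (2 ^ n).
Proof. move=> hy; elim: n => [|n IH]; first by rewrite expn0 !expr1.
by rewrite expnSr !exprM -IH -nrmC starX hy expr2. Qed.

Lemma mul_orthX (x y : A) N : x * y = 0 -> x ^+ N.+1 * y ^+ N.+1 = 0.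
Proof. by move=> h; rewrite exprSr exprS mulrA -(mulrA _ x) h mulr0 mul0r. Qed.

Lemma sum_le_const (r : seq nat) (F : nat -> R) c :
  (forall i, i \in r -> F i <= c) -> \sum_(i <- r) F i <= (size r)%:R * c.
Proof. elim: r => [|a r IH] h; first by rewrite big_nil mul0r.
rewrite big_cons /= -[(size r).+1]add1n natrD mulrDl mul1r; apply: lerD.
  by apply: h; rewrite mem_head.
by apply: IH => i ir; apply: h; rewrite in_cons ir orbT. Qed.

Lemma CL (r : seq nat) (d p : nat -> A) (c : R) : uniq r -> 0 <= c ->
  (forall i, i \in r -> star (p i) = p i) ->
  (forall i j, i \in r -> j \in r -> i != j -> p i * p j = 0) ->
  (forall i, i \in r -> d i * p i = d i) ->
  (forall i, i \in r -> p i * d i = d i) ->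
  (forall i, i \in r -> nrm (d i) <= c) ->
  nrm (\sum_(i <- r) d i) <= c.
Proof.
move=> ur c0 hp hpp hdp hpd hc.
set x := \sum_(i <- r) d i.
set h := fun i => star (d i) * d i.
have sd : forall i j, i \in r -> j \in r -> i != j -> star (d i) * d j = 0.
  move=> i j ir jr ij.
  have -> : star (d i) = star (d i) * p i by rewrite -{1}(hpd i ir) starM hp.
  have -> : d j = p j * d j by rewrite hpd.
  by rewrite -mulrA (mulrA (p i)) hpp // mul0r mulr0.
have hh : forall i j, i \in r -> j \in r -> i != j -> h i * h j = 0.
  move=> i j ir jr ij; rewrite /h.
  have -> : d i = d i * p i by rewrite hdp.
  have -> : star (d j) = p j * star (d j) by rewrite -{1}(hdp j jr) starM hp.
  by rewrite -!mulrA (mulrA (p i)) hpp // mul0r !mulr0.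
have hsa : forall i, star (h i) = h i by move=> i; rewrite /h starM starK.
have hx : star x * x = \sum_(i <- r) h i by rewrite orth_sq.
set H := star x * x.
have g : forall n, H ^+ (2 ^ n) = \sum_(i <- r) h i ^+ (2 ^ n).
  elim=> [|n IH]; first by rewrite expn0 expr1 /H hx; apply: eq_bigr => i _; rewrite expr1.
  have sf : star (\sum_(i <- r) h i ^+ (2 ^ n)) = \sum_(i <- r) h i ^+ (2 ^ n).
    by rewrite star_sum; apply: eq_bigr => i _; rewrite starX hsa.
  rewrite expnSr exprM IH expr2 -{1}sf orth_sq //.
    by apply: eq_bigr => i _; rewrite exprM expr2 starX hsa.
  move=> i j ir jr ij; rewrite starX hsa -(prednK (expn_gt0 2 n)).
  exact: mul_orthX (hh i j ir jr ij).
have Hsa : star H = H by rewrite /H starM starK.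
have : nrm H <= c ^+ 2.
  apply: (@RL R _ _ (size r)); rewrite ?nrm_ge0 ?exprn_ge0 // => n.
  rewrite -pow_sa // g; apply: le_trans (nrm_sum _ _) _.
  apply: sum_le_const => i ir; rewrite pow_sa ?hsa // /h nrmC.
  rewrite (ler_pXn2r (expn_gt0 2 n)) ?nnegrE ?exprn_ge0 ?nrm_ge0 //.
  by rewrite (ler_pXn2r (isT : (0 < 2)%N)) ?nnegrE ?nrm_ge0 // hc.
by rewrite /H nrmC (ler_pXn2r (isT : (0 < 2)%N)) ?nnegrE ?nrm_ge0.
Qed.


Lemma mainL (k : nat) (hk : (1 < k)%N)
    (e : nat -> A) (u : A) (B : A -> Prop) (z : A) (zz : nat -> A)
    (he_proj : forall i, (1 <= i <= k)%N -> projection_el star (e i))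
    (he_orth : forall i j, (1 <= i <= k)%N -> (1 <= j <= k)%N -> i <> j ->
                 e i * e j = 0)
    (hu : unitary_el star u)
    (hue : forall i, (1 <= i < k)%N -> star u * e i * u = e i.+1)
    (huek : star u * e k * u = e 1%N)
    (hBc : forall b, B b -> in_corner (e 1%N) b)
    (hzc : in_corner (e 1%N) z)
    (hzB : forall b, B b -> star z * star (u ^+ k) * b * u ^+ k * z = b)
    (hzprod : z = \prod_(1 <= i < k) zz i)
    (hzz : forall i, (1 <= i < k)%N -> unitary_corner star (e 1%N) (zz i))
    (hzk : zz k = e 1%N) :
  let w := \sum_(1 <= i < k.+1)
              e i * u ^+ (k + 1 - i) * zz i * star (u ^+ (k - i))
           + (1 - \sum_(1 <= i < k.+1) e i) * u in
  [/\ nrm (w - u) <= \big[Num.max/0]_(1 <= i < k) nrm (zz i - e 1%N),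
      (forall i, (1 <= i <= k - 1)%N -> star (w ^+ i) * e 1%N * w ^+ i = e i.+1)
    & (forall b, B b -> star (w ^+ k) * b * w ^+ k = b)].
Proof.
move=> w.
have ep : forall i, (1 <= i <= k)%N -> e i * e i = e i.
  by move=> i hi; case: (he_proj i hi).
have es : forall i, (1 <= i <= k)%N -> star (e i) = e i.
  by move=> i hi; case: (he_proj i hi).
have k1 : (1 <= 1 <= k)%N by rewrite /= ltnW.
have [uu1 uu2] := hu.
have G : forall m j, (1 <= j)%N -> (j + m <= k)%N ->
    star (u ^+ m) * e j * u ^+ m = e (j + m)%N.
  elim=> [|m IH] j j1 jm.
    by rewrite expr0 star1 mul1r mulr1 addn0.
  have -> : star (u ^+ m.+1) * e j * u ^+ m.+1
      = star u * (star (u ^+ m) * e j * u ^+ m) * u by rewrite exprSr starM !mulrA.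
  rewrite IH // ?(leq_trans _ jm) ?leq_add2l // addnS hue //.
  by rewrite -addnS jm (leq_trans j1) ?leq_addr.
have K1 : forall j, (1 <= j <= k)%N ->
    star (u ^+ (k + 1 - j)) * e j * u ^+ (k + 1 - j) = e 1%N.
  move=> j /andP [j1 jk]; rewrite addn1 subSn //.
  have -> : star (u ^+ (k - j).+1) * e j * u ^+ (k - j).+1
      = star u * (star (u ^+ (k - j)) * e j * u ^+ (k - j)) * u by rewrite exprSr starM !mulrA.
  by rewrite G ?subnKC.
have UX : forall m, star (u ^+ m) * u ^+ m = 1 /\ u ^+ m * star (u ^+ m) = 1.
  by move=> m; apply: unitX.
have zc : forall i, (1 <= i <= k)%N ->
    [/\ e 1%N * zz i = zz i, zz i * e 1%N = zz i & star (zz i) * zz i = e 1%N].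
  move=> i /andP [i1]; rewrite leq_eqVlt => /orP [/eqP ->|ik].
    by rewrite hzk es // ep.
  have [hc [h1 _]] := hzz i (introT andP (conj i1 ik)).
  rewrite /in_corner in hc; split => //.
  - by rewrite -hc !mulrA ep.
  - by rewrite -hc -!mulrA ep.
set X := fun i => u ^+ (k + 1 - i) * zz i * star (u ^+ (k - i)).
set P := \sum_(1 <= i < k.+1) e i.
have sumE : forall j (F : nat -> A), (1 <= j <= k)%N ->
    e j * \sum_(1 <= i < k.+1) (e i * F i) = e j * F j.
  move=> j F hj; rewrite mulr_sumr (bigD1_seq j) ?mem_index_iota ?ltnS ?iota_uniq //=.
  rewrite big1_seq ?addr0 ?mulrA ?ep // => i /andP [ij]; rewrite mem_index_iota ltnS => hi.
  by rewrite mulrA he_orth ?mul0r //; apply/eqP; rewrite eq_sym.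
have wE : w = \sum_(1 <= i < k.+1) (e i * X i) + (1 - P) * u.
  by rewrite /w; congr (_ + _); apply: eq_bigr => i _; rewrite /X !mulrA.
have eP : forall j, (1 <= j <= k)%N -> e j * (1 - P) = 0.
  move=> j hj; rewrite mulrBr mulr1 /P.
  have -> : \sum_(1 <= i < k.+1) e i = \sum_(1 <= i < k.+1) (e i * 1).
    by apply: eq_bigr => i _; rewrite mulr1.
  by rewrite sumE // mulr1 subrr.
have ew : forall j, (1 <= j <= k)%N -> e j * w = e j * X j.
  by move=> j hj; rewrite wE mulrDr sumE // (mulrA (e j) (1 - P)) eP // mul0r addr0.
have wej : forall j, (1 <= j < k)%N -> star w * e j * w = e j.+1.
  move=> j /andP [j1 jk].
  have hj : (1 <= j <= k)%N by rewrite j1 ltnW.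
  have hj1 : (1 <= j.+1 <= k)%N by rewrite jk.
  have -> : star w * e j * w = star (e j * w) * (e j * w).
    by rewrite starM es // !mulrA -(mulrA _ (e j) (e j)) ep.
  rewrite ew // /X !starM starK es // !mulrA.
  have -> : forall Y, Y * star (u ^+ (k + 1 - j)) * e j * e j * u ^+ (k + 1 - j) = Y * e 1%N.
    by move=> Y; rewrite -(mulrA _ (e j) (e j)) ep // -(K1 j hj) !mulrA.
  case: (zc j hj) => zc1 zc2 zc3.
  rewrite -(mulrA _ (e 1%N) (zz j)) zc1 -(mulrA _ (star (zz j)) (zz j)) zc3.
  have := K1 j.+1 hj1; rewrite addn1 subSS => h.
  by case: (unit_conj _ _ _ (UX _).1 (UX _).2 h).
have p2 : forall i, (i < k)%N -> star (w ^+ i) * e 1%N * w ^+ i = e i.+1.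
  elim=> [|i IH] ik; first by rewrite expr0 star1 mul1r mulr1.
  have -> : star (w ^+ i.+1) * e 1%N * w ^+ i.+1
      = star w * (star (w ^+ i) * e 1%N * w ^+ i) * w by rewrite exprSr starM !mulrA.
  by rewrite IH ?(ltnW ik) // wej.
pose Q := fun n => e 1%N * \prod_(1 <= i < n.+1) zz i.
have Qe : forall n, (n <= k)%N -> Q n * e 1%N = Q n.
  case=> [|n] nk; first by rewrite /Q big_geq // mulr1 ep.
  have hn : (1 <= n.+1 <= k)%N by rewrite nk.
  case: (zc n.+1 hn) => _ zc2 _.
  by rewrite /Q big_nat_recr //= -!mulrA zc2.
have C : forall n, (n <= k)%N -> e 1%N * w ^+ n = u ^+ k * Q n * star (u ^+ (k - n)).
  elim=> [|n IH] nk.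
    rewrite expr0 mulr1 subn0 /Q big_geq // mulr1.
    have := K1 1%N k1; rewrite addnK => h.
    by case: (unit_conj _ _ _ (UX _).1 (UX _).2 h).
  rewrite exprSr mulrA IH ?(ltnW nk) //.
  have hn : (1 <= n.+1 <= k)%N by rewrite nk.
  have := K1 n.+1 hn; rewrite addn1 subSS => h.
  case: (unit_conj _ _ _ (UX _).1 (UX _).2 h) => h2 h1 _.
  transitivity (u ^+ k * Q n * star (u ^+ (k - n)) * (e n.+1 * w)).
    by rewrite -[in LHS](Qe n (ltnW nk)) !mulrA -(mulrA _ (e 1%N) (star _)) -h1 !mulrA.
  rewrite ew // /X addn1 subSS !mulrA.
  rewrite -(mulrA _ (e n.+1) (u ^+ (k - n))) h2 !mulrA.
  rewrite -(mulrA _ (star (u ^+ (k - n))) (u ^+ (k - n))) (UX _).1 mulr1.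
  case: (zc n.+1 hn) => zc1 _ _.
  rewrite -(mulrA _ (e 1%N) (zz n.+1)) zc1.
  by rewrite /Q [in RHS]big_nat_recr //= !mulrA.
have Ck : e 1%N * w ^+ k = u ^+ k * z.
  rewrite C // subnn expr0 star1 mulr1 /Q big_nat_recr ?(ltnW hk) //= -hzprod hzk.
  by rewrite /in_corner in hzc; rewrite (mulrA (e 1%N)) hzc.
have p3 : forall b, B b -> star (w ^+ k) * b * w ^+ k = b.
  move=> b hb; have hbc := hBc b hb; rewrite /in_corner in hbc.
  rewrite -{1}hbc.
  have -> : star (w ^+ k) * (e 1%N * b * e 1%N) * w ^+ k
      = star (e 1%N * w ^+ k) * b * (e 1%N * w ^+ k) by rewrite starM es // !mulrA.
  by rewrite Ck starM !mulrA hzB.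
pose D := fun i => u ^+ (k - i) * (zz i - e 1%N) * star (u ^+ (k - i)).
have uE : u = \sum_(1 <= i < k.+1) (e i * u) + (1 - P) * u.
  by rewrite -mulr_suml -/P -mulrDl addrC subrK mul1r.
have wu : w - u = u * \sum_(1 <= i < k) D i.
  rewrite [X in w - X]uE wE.
  have -> : forall a b c : A, (a + c) - (b + c) = a - b.
    by move=> a b c; rewrite opprD addrACA subrr addr0.
  rewrite -sumrB big_nat_recr ?(ltnW hk) //=.
  have -> : e k * X k - e k * u = 0.
    have hkk : (1 <= k <= k)%N by rewrite leqnn (ltnW hk).
    case: (unit_conj _ _ _ uu1 uu2 huek) => h _ _.
    by rewrite /X addKn subnn expr0 star1 mulr1 expr1 hzk mulrA h -mulrA ep // subrr.
  rewrite addr0 mulr_sumr; apply: eq_big_nat => i /andP [i1 ik].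
  have hi : (1 <= i <= k)%N by rewrite i1 ltnW.
  have hi1 : (1 <= i.+1 <= k)%N by rewrite ik.
  have := K1 i hi; rewrite addn1 subSn ?(ltnW ik) // => h.
  case: (unit_conj _ _ _ (UX _).1 (UX _).2 h) => h2i _ _.
  have := K1 i.+1 hi1; rewrite addn1 subSS => h'.
  case: (unit_conj _ _ _ (UX _).1 (UX _).2 h') => _ _ h3.
  have := hue i (introT andP (conj i1 ik)) => h''.
  case: (unit_conj _ _ _ uu1 uu2 h'') => hui _ _.
  case: (zc i hi) => zc1 _ _.
  rewrite /X /D addn1 subSn ?(ltnW ik) // !mulrA h2i -(mulrA _ (e 1%N) (zz i)) zc1.
  rewrite hui -h3 exprS !(mulrBr, mulrBl) !mulrA //.
have le_bm : forall (r : seq nat) (F : nat -> R) i, i \in r ->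
    F i <= \big[Num.max/0]_(j <- r) F j.
  move=> r F i; elim: r => // a r IH; rewrite in_cons big_cons le_max.
  by case/orP => [/eqP ->|/IH ->]; rewrite ?lexx ?orbT.
have p1 : nrm (w - u) <= \big[Num.max/0]_(1 <= i < k) nrm (zz i - e 1%N).
  rewrite wu; apply: le_trans (nrmM _ _) _; rewrite (nrm_unit _ uu1) mul1r.
  apply: (@CL _ D (fun i => e i.+1)); rewrite ?iota_uniq //.
  - apply: (big_ind (fun x : R => 0 <= x)) => //; last by move=> i _; exact: nrm_ge0.
    by move=> x y hx hy; rewrite le_max hx.
  - by move=> i; rewrite mem_index_iota => /andP [i1 ik]; rewrite es // ik.
  - move=> i j; rewrite !mem_index_iota => /andP [i1 ik] /andP [j1 jk] ij.
    by apply: he_orth; rewrite ?ik ?jk //; case=> eij; move: ij; rewrite eij eqxx.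
  - move=> i; rewrite mem_index_iota => /andP [i1 ik].
    have hi : (1 <= i <= k)%N by rewrite i1 ltnW.
    have hi1 : (1 <= i.+1 <= k)%N by rewrite ik.
    have := K1 i.+1 hi1; rewrite addn1 subSS => h'.
    case: (unit_conj _ _ _ (UX _).1 (UX _).2 h') => _ h1' _.
    case: (zc i hi) => _ zc2 _.
    have zB1 : (zz i - e 1%N) * e 1%N = zz i - e 1%N by rewrite mulrBl zc2 ep.
    by rewrite /D -mulrA h1' mulrA -(mulrA _ _ (e 1%N)) zB1.
  - move=> i; rewrite mem_index_iota => /andP [i1 ik].
    have hi : (1 <= i <= k)%N by rewrite i1 ltnW.
    have hi1 : (1 <= i.+1 <= k)%N by rewrite ik.
    have := K1 i.+1 hi1; rewrite addn1 subSS => h'.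
    case: (unit_conj _ _ _ (UX _).1 (UX _).2 h') => h2' _ _.
    case: (zc i hi) => zc1 _ _.
    have zB2 : e 1%N * (zz i - e 1%N) = zz i - e 1%N by rewrite mulrBr zc1 ep.
    by rewrite /D !mulrA h2' -(mulrA _ (e 1%N)) zB2.
  - move=> i hi; rewrite /D.
    apply: le_trans (nrmM _ _) _.
    have -> : nrm (star (u ^+ (k - i))) = 1 by apply: nrm_unit; rewrite starK (UX _).2.
    rewrite mulr1; apply: le_trans (nrmM _ _) _.
    rewrite (nrm_unit _ (UX _).1) mul1r; exact: le_bm.
split => //.
by move=> i /andP [i1 ik]; apply: p2; lia.
Qed.
End CS.

Theorem lemma2p12 (R : realType) (A : algType R[i]) (star : A -> A)
    (nrm : A -> R) (HA : is_unital_Cstar star nrm)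
    (k : nat) (hk : (1 < k)%N)
    (e : nat -> A) (u : A) (B : A -> Prop) (z : A) (zz : nat -> A)
    (he_proj : forall i, (1 <= i <= k)%N -> projection_el star (e i))
    (he_orth : forall i j, (1 <= i <= k)%N -> (1 <= j <= k)%N -> i <> j ->
                 e i * e j = 0)
    (hu : unitary_el star u)
    (hue : forall i, (1 <= i < k)%N -> star u * e i * u = e i.+1)
    (huek : star u * e k * u = e 1%N)
    (hB : fd_Cstar_subalg_corner star nrm (e 1%N) B)
    (hz0 : unitary0_corner star nrm (e 1%N) z)
    (hzB : forall b, B b -> star z * star (u ^+ k) * b * u ^+ k * z = b)
    (hzprod : z = \prod_(1 <= i < k) zz i)
    (hzz : forall i, (1 <= i < k)%N -> unitary_corner star (e 1%N) (zz i))
    (hzk : zz k = e 1%N) :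
  let w := \sum_(1 <= i < k.+1)
              e i * u ^+ (k + 1 - i) * zz i * star (u ^+ (k - i))
           + (1 - \sum_(1 <= i < k.+1) e i) * u in
  [/\ nrm (w - u) <= \big[Num.max/0]_(1 <= i < k) nrm (zz i - e 1%N),
      (forall i, (1 <= i <= k - 1)%N -> star (w ^+ i) * e 1%N * w ^+ i = e i.+1)
    & (forall b, B b -> star (w ^+ k) * b * w ^+ k = b)].
Proof.
case: HA => [[sD sZ sM sK] [n0 nZ nD nM] [nC n1 _]].
case: hB => _ hBc _ _.
have hzc : in_corner (e 1%N) z.
  by case: hz0 => S [h _ hSz _]; case: (h z hSz).
exact: (@mainL R A star nrm sD sM sK nZ nD nM nC n1 k hk e u B z zz he_proj he_orth hu hue huek hBc hzc hzB hzprod hzz hzk).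
Qed.
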